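(* If $G$ is a graph with maximum degree $\Delta(G)\ge 3$, then $\alpha_{\mathrm{od}}(G)\ge |G|/((\Delta(G))^2-1)$.
   Context: All graphs are finite and simple; $|G|$ is the number of vertices. An odd independent set in $G=(V,E)$ is an independent set $S\subseteq V$ such that for every $v\in V\setminus S$, either $N(v)\cap S=\varnothing$ or $|N(v)\cap S|$ is odd, where $N(v)$ is the open neighborhood of $v$. $\alpha_{\mathrm{od}}(G)$ is the maximum size of an odd independent set of $G$. *)

(* Defs.v *)
From mathcomp Require Import all_boot all_order all_algebra.
Set Implicit Arguments. Unset Strict Implicit. Unset Printing Implicit Defensive.

(* A finite simple graph: vertex type T : finType, adjacency e : rel T,
   required (in the theorem) to be symmetric and irreflexive. *)

Definition nbhd (T : finType) (e : rel T) (v : T) : {set T} := [set u | e v u].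

Definition deg (T : finType) (e : rel T) (v : T) : nat := #|nbhd e v|.

(* maximum degree Delta(G) (0 for the empty graph) *)
Definition maxdeg (T : finType) (e : rel T) : nat := \max_(v : T) deg e v.

Definition independent (T : finType) (e : rel T) (S : {set T}) : bool :=
  [forall u in S, forall v in S, ~~ e u v].

Definition odd_independent (T : finType) (e : rel T) (S : {set T}) : bool :=
  independent e S &&
  [forall v in ~: S, (#|nbhd e v :&: S| == 0) || odd #|nbhd e v :&: S|].

Definition alpha_od (T : finType) (e : rel T) : nat :=
  \max_(S : {set T} | odd_independent e S) #|S|.

(* Main.v *)
Require Import Defs.
From mathcomp Require Import all_boot all_order all_algebra zify.
Set Implicit Arguments. Unset Strict Implicit. Unset Printing Implicit Defensive.

Section Proof.
Variables (T : finType) (e : rel T).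
Hypotheses (e_sym : symmetric e) (e_irr : irreflexive e).

Definition near2 x y := (x == y) || e x y || [exists w, e x w && e w y].
Definition ball y := [set x | near2 x y].
Definition N2 (S : {set T}) := [set x | [exists s in S, near2 x s]].
Local Notation D := (maxdeg e).
Definition Mset y u := (u |: nbhd e u) :\ y.

Lemma near2C x y : near2 x y = near2 y x.
Proof.
rewrite /near2 eq_sym e_sym; congr (_ || _).
by apply/existsP/existsP => -[w /andP[h1 h2]]; exists w; rewrite e_sym h2 e_sym h1.
Qed.

Lemma deg_le v : deg e v <= D.
Proof. exact: (leq_bigmax (F := deg e) v). Qed.

Lemma ball_sub y : ball y \subset y |: \bigcup_(u in nbhd e y) Mset y u.
Proof.
apply/subsetP => x; rewrite !inE /near2.
case: eqP => [->|/eqP nxy] //=; rewrite ?eqxx //= => H.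
apply/bigcupP; case/orP: H => [exy|/existsP[w /andP[exw ewy]]].
  exists x; first by rewrite inE e_sym.
  by rewrite !inE nxy eqxx.
exists w; first by rewrite inE e_sym.
by rewrite !inE nxy /= e_sym exw orbT.
Qed.

Lemma card_Mset y u : u \in nbhd e y -> #|Mset y u| <= D.
Proof.
rewrite inE => eyu.
have h1 : #|u |: nbhd e u| = (#|Mset y u|).+1.
  rewrite (cardsD1 y) /Mset !inE e_sym eyu orbT //.
have h2 : #|u |: nbhd e u| = (deg e u).+1.
  by rewrite cardsU1 inE e_irr.
have -> : #|Mset y u| = deg e u by apply/eqP; rewrite -eqSS -h1 -h2.
exact: deg_le.
Qed.

Lemma card_bigcup (X : {set T}) (F : T -> {set T}) :
  #|\bigcup_(u in X) F u| <= \sum_(u in X) #|F u|.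
Proof.
apply: (big_ind2 (fun (A : {set T}) n => #|A| <= n)); first by rewrite cards0.
  move=> A n B m hA hB; apply: leq_trans (leq_add hA hB).
  by rewrite -cardsUI leq_addr.
by [].
Qed.

Lemma card_bigcup1 (X : {set T}) (F : T -> {set T}) p q :
  p \in X -> q \in X -> p != q -> ~~ [disjoint F p & F q] ->
  (#|\bigcup_(u in X) F u|).+1 <= \sum_(u in X) #|F u|.
Proof.
move=> pX qX npq hd.
rewrite (big_setD1 p pX) (big_setD1 p pX) /=.
set B := \bigcup_(u in X :\ p) F u.
have hB := card_bigcup (X :\ p) F.
have qX' : q \in X :\ p by rewrite !inE eq_sym npq.
have : 0 < #|F p :&: B|.
  rewrite -setI_eq0 in hd; case/set0Pn: hd => x; rewrite inE => /andP[xp xq].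
  apply/card_gt0P; exists x; rewrite inE xp /=.
  by apply/bigcupP; exists q.
have := cardsUI (F p) B.
move: hB; set s := \sum_(i in X :\ p) _; set a := #|F p :|: B|; set c := #|F p :&: B|.
move=> hB hU hc.
move: hB hU hc; rewrite -/B; move: (#|B|) (#|F p|) a c s => ??????; lia.
Qed.

Lemma card_bigcup2 (X : {set T}) (F : T -> {set T}) p q p' q' :
  p \in X -> q \in X -> p != q -> ~~ [disjoint F p & F q] ->
  p' \in X :\ p -> q' \in X :\ p -> p' != q' -> ~~ [disjoint F p' & F q'] ->
  (#|\bigcup_(u in X) F u|).+2 <= \sum_(u in X) #|F u|.
Proof.
move=> pX qX npq hd p'X q'X np'q' hd'.
rewrite (big_setD1 p pX) (big_setD1 p pX) /=.
set B := \bigcup_(u in X :\ p) F u.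
have hB := card_bigcup1 p'X q'X np'q' hd'.
have qX' : q \in X :\ p by rewrite !inE eq_sym npq.
have : 0 < #|F p :&: B|.
  rewrite -setI_eq0 in hd; case/set0Pn: hd => x; rewrite inE => /andP[xp xq].
  apply/card_gt0P; exists x; rewrite inE xp /=.
  by apply/bigcupP; exists q.
have := cardsUI (F p) B.
move: hB; set s := \sum_(i in X :\ p) _; set a := #|F p :|: B|; set c := #|F p :&: B|.
move=> hB hU hc.
move: hB hU hc; rewrite -/B; move: (#|B|) (#|F p|) a c s => ??????; lia.
Qed.

Lemma ball_card y : #|ball y| <= (\sum_(u in nbhd e y) #|Mset y u|).+1.
Proof.
apply: leq_trans (subset_leq_card (ball_sub y)) _.
rewrite cardsU1 -add1n; apply: leq_add; first by case: (_ \notin _).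
exact: card_bigcup.
Qed.

Lemma ball_card1 y : #|ball y| <= #|\bigcup_(u in nbhd e y) Mset y u|.+1.
Proof.
apply: leq_trans (subset_leq_card (ball_sub y)) _.
by rewrite cardsU1 -add1n; apply: leq_add; first by case: (_ \notin _).
Qed.

Lemma sumM y : \sum_(u in nbhd e y) #|Mset y u| <= deg e y * D.
Proof.
rewrite /deg -sum_nat_const; apply: leq_sum => u uy; exact: card_Mset.
Qed.

Lemma ball_le y : #|ball y| <= (D * D).+1.
Proof.
apply: leq_trans (ball_card y) _; rewrite ltnS.
apply: leq_trans (sumM y) _; rewrite leq_mul2r deg_le orbT //.
Qed.

Definition triple y p q r := [&& p \in nbhd e y, q \in nbhd e y, r \in nbhd e y,
  p != q, q != r, p != r, [disjoint Mset y p & Mset y q],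
  [disjoint Mset y q & Mset y r] & [disjoint Mset y p & Mset y r]].

Definition has_triple y := [exists p, exists q, exists r, triple y p q r].

Lemma conflict y (Z : {set T}) : Z \subset nbhd e y -> 2 < #|Z| -> ~~ has_triple y ->
  exists a b, [/\ a \in Z, b \in Z, a != b & ~~ [disjoint Mset y a & Mset y b]].
Proof.
move=> /subsetP sZ /card_gt2P [p [q [r [[pZ qZ rZ] [npq nqr nrp]]]]] ht.
case: (boolP [disjoint Mset y p & Mset y q]) => h1; last by exists p, q.
case: (boolP [disjoint Mset y q & Mset y r]) => h2; last by exists q, r.
case: (boolP [disjoint Mset y p & Mset y r]) => h3; last by exists p, r; rewrite eq_sym.
case/negP: ht; apply/existsP; exists p; apply/existsP; exists q; apply/existsP; exists r.
by rewrite /triple !sZ //= npq nqr eq_sym nrp h1 h2 h3.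
Qed.

Lemma bad y : 3 <= D -> D * D - 1 < #|ball y| -> ~~ has_triple y ->
  [/\ D = 3, deg e y = 3 & #|ball y| <= 9].
Proof.
move=> hD hb ht.
have hs := sumM y; have hbc := ball_card y; have hd := deg_le y.
have hb1 := ball_card1 y.
case: (leqP (deg e y) 2) => hd2.
  have : deg e y * D <= 2 * D by rewrite leq_mul2r hd2 orbT.
  move: hb hs hbc hd hd2 hD; move: (deg e y) (#|ball y|) (\sum_(u in _) _) D => ????; nia.
have [a [b [aZ bZ nab hab]]] := conflict (subxx _) hd2 ht.
have h1 := card_bigcup1 aZ bZ nab hab.
case: (leqP (deg e y) 3) => hd3.
  have d3 : deg e y = 3 by apply/eqP; rewrite eqn_leq hd3 hd2.
  have hbl : #|ball y| <= 3 * D.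
    by move: hb1 h1 hs; rewrite d3; move: (#|ball y|) (#|_|) (\sum_(u in _) _) D => ????; lia.
  case: (leqP D 3) => hD3.
    have D3 : D = 3 by apply/eqP; rewrite eqn_leq hD3 hD.
    by split => //; move: hbl; rewrite D3.
  by move: hbl hb hD3; move: (#|ball y|) D => ??; nia.
have sZ : nbhd e y :\ a \subset nbhd e y by apply: subsetDl.
have cZ : 2 < #|nbhd e y :\ a|.
  by move: hd3; rewrite /deg (cardsD1 a (nbhd e y)) aZ.
have [a' [b' [aZ' bZ' nab' hab']]] := conflict sZ cZ ht.
have h2 := card_bigcup2 aZ bZ nab hab aZ' bZ' nab' hab'.
have : deg e y * D <= D * D by rewrite leq_mul2r hd orbT.
move: hb hs hb1 h2 hD; move: (deg e y) (#|ball y|) (\sum_(u in _) _) (#|_|) D => ?????; nia.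
Qed.

Lemma oiP (S : {set T}) : reflect ((forall u v, u \in S -> v \in S -> ~~ e u v) /\
   (forall v, v \notin S -> (#|nbhd e v :&: S| == 0) || odd #|nbhd e v :&: S|))
  (odd_independent e S).
Proof.
apply: (iffP andP) => [[/forallP h1 /forallP h2]|[h1 h2]]; split.
- move=> u v uS vS; move/implyP: (h1 u) => /(_ uS) /forallP /(_ v) /implyP; exact.
- by move=> v vS; move/implyP: (h2 v); apply; rewrite inE.
- apply/forallP => u; apply/implyP => uS; apply/forallP => v; apply/implyP => vS; exact: h1.
- by apply/forallP => v; apply/implyP; rewrite inE; apply: h2.
Qed.

Lemma notdisj x (A B : {set T}) : x \in A -> x \in B -> ~~ [disjoint A & B].
Proof. by move=> xA xB; rewrite -setI_eq0; apply/set0Pn; exists x; rewrite inE xA. Qed.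

Lemma le1_ok n : n <= 1 -> (n == 0) || odd n.
Proof. by case: n => [|[|]]. Qed.

Lemma oi_single y : odd_independent e [set y].
Proof.
apply/oiP; split.
  by move=> u v; rewrite !inE => /eqP -> /eqP ->; rewrite e_irr.
move=> v _; apply: le1_ok; rewrite -(cards1 y); apply: subset_leq_card; exact: subsetIr.
Qed.

Lemma oi_union (S1 S2 : {set T}) : odd_independent e S1 -> odd_independent e S2 ->
  (forall t, t \in S2 -> t \notin N2 S1) -> odd_independent e (S1 :|: S2).
Proof.
move=> /oiP [i1 c1] /oiP [i2 c2] far.
have cross s t : s \in S1 -> t \in S2 -> ~~ e s t.
  move=> sS tS; apply/negP => est; move/negP: (far t tS); apply.
  by rewrite inE; apply/existsP; exists s; rewrite sS /near2 e_sym est orbT.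
apply/oiP; split.
  move=> u v; rewrite !inE => /orP[uS|uS] /orP[vS|vS]; first exact: i1.
  - exact: cross.
  - by rewrite e_sym; apply: cross.
  - exact: i2.
move=> v; rewrite !inE negb_or => /andP[v1 v2].
rewrite setIUr.
case: (eqVneq (nbhd e v :&: S1) set0) => [->|/set0Pn[s]]; first by rewrite set0U; apply: c2.
rewrite !inE => /andP[evs sS].
case: (eqVneq (nbhd e v :&: S2) set0) => [->|/set0Pn[t]]; first by rewrite setU0; apply: c1.
rewrite !inE => /andP[evt tS].
move/negP: (far t tS); case; rewrite inE; apply/existsP; exists s; rewrite sS /near2.
by apply/orP; right; apply/existsP; exists v; rewrite e_sym evt evs.
Qed.

Definition T3 (p q r : T) : {set T} := p |: (q |: [set r]).

Lemma T3P p q r x : (x \in T3 p q r) = [|| x == p, x == q | x == r].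
Proof. by rewrite !inE. Qed.

Lemma tripleE y p q r : triple y p q r ->
  [/\ p \in nbhd e y, q \in nbhd e y, r \in nbhd e y, p != q & q != r] /\
  [/\ p != r, [disjoint Mset y p & Mset y q],
  [disjoint Mset y q & Mset y r] & [disjoint Mset y p & Mset y r]].
Proof. by case/and5P => ? ? ? ? /and5P[? ? ? ? ?]. Qed.

Lemma triple_sub y p q r : triple y p q r -> T3 p q r \subset nbhd e y.
Proof.
case/tripleE=> [[hp hq hr _ _] _]; apply/subsetP => x; rewrite T3P.
by case/or3P => /eqP ->.
Qed.

Lemma triple_card y p q r : triple y p q r -> #|T3 p q r| = 3.
Proof.
case/tripleE=> [[_ _ _ npq nqr] [npr _ _ _]].
by rewrite /T3 cardsU1 cardsU1 cards1 !inE (negbTE npq) (negbTE nqr) (negbTE npr).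
Qed.

Lemma triple_pd y p q r : triple y p q r -> forall u v, u \in T3 p q r -> v \in T3 p q r ->
  u != v -> [disjoint Mset y u & Mset y v].
Proof.
case/tripleE=> [[_ _ _ _ _] [_ d1 d2 d3]] u v; rewrite !T3P.
by case/or3P => /eqP -> /or3P[] /eqP ->; rewrite ?eqxx // => _; rewrite // disjoint_sym.
Qed.

Lemma oi_triple y p q r : triple y p q r -> odd_independent e (T3 p q r).
Proof.
move=> ht; have sub := subsetP (triple_sub ht); have pd := triple_pd ht.
have ny v : v \in T3 p q r -> v != y.
  move=> /sub; rewrite inE => eyv; apply/eqP => vy; by rewrite vy e_irr in eyv.
apply/oiP; split.
  move=> u v uT vT; apply/negP => euv.
  case: (eqVneq u v) => [uv|nuv]; first by rewrite uv e_irr in euv.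
  move: (pd u v uT vT nuv); apply/negP; apply: (@notdisj v).
    by rewrite !inE ny //= euv orbT.
  by rewrite !inE ny //= eqxx.
move=> v vT; case: (eqVneq v y) => [->|nvy].
  rewrite (setIidPr (triple_sub ht)) (triple_card ht) //.
apply: le1_ok; rewrite leqNgt; apply/negP => /card_gt1P [a [b [ha hb nab]]].
move: ha hb; rewrite inE [b \in _ :&: _]inE => /andP[eva aT] /andP[evb bT].
  move: eva evb; rewrite !inE => eva evb.
move: (pd a b aT bT nab); apply/negP; apply: (@notdisj v).
  by rewrite !inE nvy /= e_sym eva orbT.
by rewrite !inE nvy /= e_sym evb orbT.
Qed.

Lemma handshake (R : {set T}) : (forall z w, z \in R -> e z w -> w \in R) ->
  ~~ odd (\sum_(z in R) deg e z).
Proof.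
move=> cl.
have E z : z \in R -> deg e z = \sum_(w in R) (e z w : nat).
  move=> zR; rewrite /deg -sum1_card.
  rewrite (eq_bigl (fun w => (w \in R) && e z w)); last first.
    by move=> w; rewrite inE; case ezw: (e z w); rewrite ?andbT ?andbF // (cl z w).
  by rewrite big_mkcondr /=; apply: eq_bigr => w _; case: (e z w).
rewrite (eq_bigr _ E).
pose g z w := (e z w && (enum_rank z < enum_rank w)%N : nat).
have F z w : (e z w : nat) = g z w + g w z.
  rewrite /g e_sym; case ewz: (e w z) => //=.
  case: (ltngtP (enum_rank z) (enum_rank w)) => // /val_inj /enum_rank_inj zw.
  by rewrite zw e_irr in ewz.
under eq_bigr do under eq_bigr do rewrite F.
under eq_bigr do rewrite big_split /=.
rewrite big_split /= [X in _ + X](exchange_big) /= addnn odd_double //.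
Qed.

Lemma N2U (A B : {set T}) : N2 (A :|: B) = N2 A :|: N2 B.
Proof.
apply/setP => x; rewrite !inE; apply/existsP/orP.
  case=> s /andP[]; rewrite inE => /orP[sA|sB] h.
    by left; apply/existsP; exists s; rewrite sA.
  by right; apply/existsP; exists s; rewrite sB.
by case=> /existsP[s /andP[sX h]]; exists s; rewrite inE sX ?orbT.
Qed.

Lemma N21 y : N2 [set y] = ball y.
Proof.
apply/setP => x; rewrite !inE; apply/existsP/idP => [[s /andP[]]|h].
  by rewrite inE => /eqP ->.
by exists y; rewrite inE eqxx.
Qed.

Lemma selfN2 (S : {set T}) : S \subset N2 S.
Proof. by apply/subsetP => s sS; rewrite inE; apply/existsP; exists s; rewrite sS /near2 eqxx. Qed.

Lemma extend (S S0 : {set T}) : odd_independent e S -> odd_independent e S0 ->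
  (forall t, t \in S0 -> t \notin N2 S) -> S0 != set0 ->
  [/\ odd_independent e (S :|: S0), N2 (S :|: S0) = N2 S :|: N2 S0,
      #|S :|: S0| = #|S| + #|S0| & #|~: N2 (S :|: S0)| < #|~: N2 S|].
Proof.
move=> h1 h2 far /set0Pn [t tS0]; split.
- exact: oi_union.
- exact: N2U.
- rewrite -cardsUI; suff -> : S :&: S0 = set0 by rewrite cards0 addn0.
  apply/setP => x; rewrite !inE; apply/negP => /andP[xS xS0].
  by move/negP: (far x xS0); apply; apply: (subsetP (selfN2 S)).
- apply: proper_card; apply/properP; split.
    by apply/subsetP => x; rewrite N2U !inE negb_or => /andP[].
  exists t; first by rewrite inE far.
  by rewrite N2U !in_setC in_setU (subsetP (selfN2 S0)) ?orbT.
Qed.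

Lemma overlap (S : {set T}) x v : x \in N2 S -> v \notin N2 S -> e x v ->
  exists a, [/\ a != x, a \in N2 S, a \in ball v & x \in ball v].
Proof.
rewrite !inE => /existsP[s /andP[sS]] hx hv exv.
have hxv : near2 x v by rewrite /near2 exv orbT.
move: hx; rewrite /near2 => /orP[/orP[/eqP xs|exs]|/existsP[w /andP[exw ews]]].
- case/negP: hv; apply/existsP; exists s; rewrite sS /near2 -xs e_sym exv orbT //.
- case/negP: hv; apply/existsP; exists s; rewrite sS /near2; apply/orP; right.
  by apply/existsP; exists x; rewrite e_sym exv exs.
exists w; split.
- by apply/eqP => wx; rewrite wx e_irr in exw.
- by rewrite inE; apply/existsP; exists s; rewrite sS /near2 ews orbT.
- by rewrite inE /near2; apply/orP; right; apply/existsP; exists x; rewrite e_sym exw exv.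
- by [].
Qed.

Lemma card_overlap (A B : {set T}) a x : a != x -> a \in A -> a \in B -> x \in A -> x \in B ->
  #|A :|: B| + 2 <= #|A| + #|B|.
Proof.
move=> nax aA aB xA xB; rewrite -cardsUI leq_add2l.
by apply/card_gt1P; exists a, x; rewrite !inE aA aB xA xB.
Qed.

Lemma card3_sub (W A B C : {set T}) : W \subset A -> W \subset B -> W \subset C ->
  #|A :|: (B :|: C)| + 2 * #|W| <= #|A| + #|B| + #|C|.
Proof.
move=> WA WB WC.
have sub : A :|: (B :|: C) \subset A :|: ((B :\: W) :|: (C :\: W)).
  apply/subsetP => x; rewrite !inE.
  case xW: (x \in W) => /=; last by [].
  by rewrite (subsetP WA).
have h1 := subset_leq_card sub.
have h2 := cardsUI A ((B :\: W) :|: (C :\: W)).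
have h3 := cardsUI (B :\: W) (C :\: W).
have h4 := cardsID W B; have h5 := cardsID W C.
rewrite (setIidPr WB) in h4; rewrite (setIidPr WC) in h5.
move: h1 h2 h3 h4 h5.
move: (#|A :|: (B :|: C)|) (#|A :|: _|) (#|A :&: _|) (#|B :\: W|) (#|C :\: W|)
  (#|(B :\: W) :|: _|) (#|(B :\: W) :&: _|) #|A| #|B| #|C| #|W| => *; lia.
Qed.

Lemma triple_cost y p q r : triple y p q r ->
  #|N2 (T3 p q r)| + 8 <= 3 * (D * D).+1.
Proof.
move=> ht.
have sub := subsetP (triple_sub ht).
have yT : y \notin T3 p q r.
  by apply/negP => /sub; rewrite inE e_irr.
set W := y |: T3 p q r.
have cW : #|W| = 4 by rewrite cardsU1 yT (triple_card ht).
have Wb t : t \in T3 p q r -> W \subset ball t.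
  move=> tT; apply/subsetP => x.
  have eyt : e y t by move: (sub t tT); rewrite inE.
  rewrite in_setU1 => /orP[/eqP ->|xT]; rewrite inE /near2; first by rewrite eyt orbT.
  case: (eqVneq x t) => [->|]; first by [].
  move=> _; apply/orP; right; apply/existsP; exists y.
  by move: (sub x xT); rewrite inE e_sym => ->.
have pT : p \in T3 p q r by rewrite T3P eqxx.
have qT : q \in T3 p q r by rewrite T3P eqxx orbT.
have rT : r \in T3 p q r by rewrite T3P eqxx !orbT.
have := card3_sub (Wb p pT) (Wb q qT) (Wb r rT).
rewrite cW /T3 !N2U !N21.
have := ball_le p; have := ball_le q; have := ball_le r.
move: (#|ball p :|: _|) #|ball p| #|ball q| #|ball r| (D * D) => *; lia.
Qed.

Lemma cardU_le (A B : {set T}) : #|A :|: B| <= #|A| + #|B|.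
Proof. by rewrite -cardsUI leq_addr. Qed.

Lemma arith16 a1 a2 a3 : a1 + 2 <= a2 + a3 -> a2 <= 9 -> a3 <= 9 -> a1 <= (3*3-1)*2.
Proof. lia. Qed.

Lemma step (hD : 3 <= D) (S : {set T}) : odd_independent e S ->
  #|N2 S| <= (D * D - 1) * #|S| -> 0 < #|~: N2 S| ->
  exists S', [/\ odd_independent e S', #|N2 S'| <= (D * D - 1) * #|S'| &
                 #|~: N2 S'| < #|~: N2 S|].
Proof.
move=> hoi hc hpos.
have hDD : 9 <= D * D by apply: (@leq_mul 3 3).
case: (boolP [exists x, exists v, [&& x \in N2 S, v \notin N2 S & e x v]]).
  case/existsP=> x /existsP[v /and3P[xS vS exv]].
  have far : forall t, t \in [set v] -> t \notin N2 S by move=> t; rewrite inE => /eqP ->.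
  have ne : [set v] != set0 by apply/set0Pn; exists v; rewrite inE.
  have [oi' eqN cS lt] := extend hoi (oi_single v) far ne.
  exists (S :|: [set v]); split => //.
  rewrite eqN N21 cS cards1.
  have [a [nax aS av xv]] := overlap xS vS exv.
  have := card_overlap nax aS av xS xv; have := ball_le v.
  rewrite mulnDr muln1; move: hc hDD.
  move: (#|N2 S :|: _|) #|N2 S| #|ball v| (D * D) ((D * D - 1) * #|S|) => *; lia.
move=> hA.
have cl z w : z \notin N2 S -> e z w -> w \notin N2 S.
  move=> zN ezw; apply/negP => wN; move/negP: hA; apply.
  by apply/existsP; exists w; apply/existsP; exists z; rewrite wN zN e_sym ezw.
case: (boolP [exists z, (z \notin N2 S) && ((#|ball z| <= D * D - 1) || has_triple z)]).
  case/existsP=> z /andP[zN /orP[hz|/existsP[p /existsP[q /existsP[r ht]]]]].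
    have far : forall t, t \in [set z] -> t \notin N2 S by move=> t; rewrite inE => /eqP ->.
    have ne : [set z] != set0 by apply/set0Pn; exists z; rewrite inE.
    have [oi' eqN cS lt] := extend hoi (oi_single z) far ne.
    exists (S :|: [set z]); split => //.
    rewrite eqN N21 cS cards1; have := cardU_le (N2 S) (ball z).
    rewrite mulnDr muln1; move: hc hz.
    move: (#|N2 S :|: _|) #|N2 S| #|ball z| (D * D - 1) ((D * D - 1) * #|S|) => *; lia.
  have sub := subsetP (triple_sub ht).
  have far : forall t, t \in T3 p q r -> t \notin N2 S.
    by move=> t /sub; rewrite inE; apply: cl.
  have ne : T3 p q r != set0 by apply/set0Pn; exists p; rewrite T3P eqxx.
  have [oi' eqN cS lt] := extend hoi (oi_triple ht) far ne.
  exists (S :|: T3 p q r); split => //.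
  rewrite eqN cS (triple_card ht); have := cardU_le (N2 S) (N2 (T3 p q r)).
  have := triple_cost ht.
  rewrite mulnDr; move: hc hDD.
  move: (#|N2 S :|: _|) #|N2 S| #|N2 (T3 p q r)| (D * D) ((D * D - 1) * #|S|) => *; lia.
move=> hB.
have allbad z : z \notin N2 S -> (D * D - 1 < #|ball z|) /\ ~~ has_triple z.
  move=> zN; move/existsPn: hB => /(_ z); rewrite zN /= negb_or -ltnNge.
  by case/andP.
have badz z : z \notin N2 S -> [/\ D = 3, deg e z = 3 & #|ball z| <= 9].
  by move=> zN; have [h1 h2] := allbad z zN; apply: bad.
have [y0] := card_gt0P hpos; rewrite inE => y0N.
have [D3 _ hb9] := badz y0 y0N.
have ballU x : x \in ball y0 -> x \notin N2 S.
  rewrite inE /near2 => /orP[/orP[/eqP ->|exy]|/existsP[w /andP[exw ewy]]] //.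
    by apply: (cl y0) => //; rewrite e_sym.
  by apply: (cl w); [apply: (cl y0) => //; rewrite e_sym | rewrite e_sym].
case: (boolP [exists x, exists v, [&& x \in ball y0, v \notin ball y0 & e x v]]).
  case/existsP=> x /existsP[v /and3P[xB vB exv]].
  have vN : v \notin N2 S by apply: (cl x) => //; apply: ballU.
  have y0B : y0 \in ball y0 by rewrite inE /near2 eqxx.
  have nyv : y0 != v by apply/eqP => yv; rewrite -yv y0B in vB.
  have oi0 : odd_independent e ([set y0] :|: [set v]).
    apply: oi_union; [exact: oi_single | exact: oi_single |].
    by move=> t; rewrite inE N21 => /eqP ->.
  have far : forall t, t \in [set y0] :|: [set v] -> t \notin N2 S.
    by move=> t; rewrite in_setU !in_set1 => /orP[] /eqP ->.
  have ne : [set y0] :|: [set v] != set0 by apply/set0Pn; exists y0; rewrite !inE eqxx.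
  have [oi' eqN cS lt] := extend hoi oi0 far ne.
  exists (S :|: ([set y0] :|: [set v])); split => //.
  rewrite eqN cS cards2 nyv N2U !N21.
  have xB' : x \in N2 [set y0] by rewrite N21.
  have vB' : v \notin N2 [set y0] by rewrite N21.
  have [a [nax aS av xv]] := overlap xB' vB' exv.
  rewrite N21 in aS xB'.
  have := card_overlap nax aS av xB' xv.
  have [_ _ hv9] := badz v vN.
  have := cardU_le (N2 S) (ball y0 :|: ball v).
  rewrite D3 mulnDr; move: hc hb9 hv9; rewrite D3.
  rewrite /= => h1 h2 h3 h4 h5.
  apply: (leq_trans h4); apply: leq_add h1 _.
  exact: arith16 h5 h2 h3.
move=> hC.
have cl2 z w : z \in ball y0 -> e z w -> w \in ball y0.
  move=> zB ezw; case: (boolP (w \in ball y0)) => // wB; case/negP: hC.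
  by apply/existsP; exists z; apply/existsP; exists w; rewrite zB wB ezw.
have := handshake cl2.
rewrite (eq_bigr (fun _ => 3)); last by move=> z zB; case: (badz z (ballU z zB)).
rewrite sum_nat_const.
have [h9 _] := allbad y0 y0N.
have c9 : #|ball y0| = 9.
  by apply/eqP; rewrite eqn_leq hb9; move: h9; rewrite D3.
by rewrite c9.
Qed.

Lemma grow (hD : 3 <= D) n : forall S, #|~: N2 S| <= n -> odd_independent e S ->
  #|N2 S| <= (D * D - 1) * #|S| ->
  exists S', odd_independent e S' /\ #|T| <= (D * D - 1) * #|S'|.
Proof.
elim: n => [|n IH] S hn hoi hc; case: (posnP #|~: N2 S|) => [h0|hpos].
- by exists S; split => //; rewrite -(cardsC (N2 S)) h0 addn0.
- by move: hpos; rewrite lt0n -leqn0 hn.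
- by exists S; split => //; rewrite -(cardsC (N2 S)) h0 addn0.
have [S' [h1 h2 h3]] := step hD hoi hc hpos.
apply: (IH S') => //; rewrite -ltnS; exact: leq_trans h3 hn.
Qed.

End Proof.

Theorem theorem5_nat (T : finType) (e : rel T)
  (e_sym : symmetric e) (e_irr : irreflexive e)
  (hD : (3 <= maxdeg e)%N) :
  #|T| <= (maxdeg e * maxdeg e - 1) * alpha_od e.
Proof.
have h0 : #|~: N2 e set0| <= #|T| by apply: max_card.
have hs0 : #|N2 e set0| <= (maxdeg e * maxdeg e - 1) * #|(set0 : {set T})|.
  rewrite cards0 muln0 leqn0 cards_eq0; apply/eqP/setP => x; rewrite !inE.
  by apply/existsP => -[s]; rewrite inE.
have oi0 : odd_independent e set0.
  apply/andP; split; apply/forallP => x; apply/implyP; rewrite ?inE //.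
  by move=> _; rewrite setI0 cards0.
have [S [hoi hc]] := grow e_sym e_irr hD h0 oi0 hs0.
apply: (leq_trans hc); rewrite leq_mul2l; apply/orP; right.
rewrite /alpha_od; exact: (@leq_bigmax_cond _ (fun S => odd_independent e S) (fun S => #|S|) S hoi).
Qed.

Import Order.TTheory GRing.Theory Num.Theory.
Local Open Scope ring_scope.

Theorem theorem5 (T : finType) (e : rel T)
  (e_sym : symmetric e) (e_irr : irreflexive e)
  (hD : (3 <= maxdeg e)%N) :
  (#|T|%:R / ((maxdeg e)%:R ^+ 2 - 1) <= (alpha_od e)%:R :> rat).
Proof.
have h := theorem5_nat e_sym e_irr hD.
have hDD : (1 <= maxdeg e * maxdeg e)%N by rewrite muln_gt0 -ltnS ltnW // ltnS; apply: leq_trans hD.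
have -> : (maxdeg e)%:R ^+ 2 - 1 = (maxdeg e * maxdeg e - 1)%:R :> rat.
  by rewrite natrB // natrM expr2.
have hpos : (0 : rat) < (maxdeg e * maxdeg e - 1)%:R.
  rewrite ltr0n subn_gt0.
  by apply: (@leq_trans 9) => //; apply: (@leq_mul 3 3).
rewrite ler_pdivrMr // -natrM ler_nat mulnC //.
Qed.
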